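(* Consider the optimization problem $\mathcal{P}_3$ with Lagrangian $h$ and multipliers $\theta_k,\Gamma_{k,l},\eta_{k,i\to l},\beta$ described in the context. The receivers, the Lagrange multiplier $\beta$ and the precoders given by $$V_{k,i\to l}=\alpha_{k,l}\,\mathbf{p}_k^H\mathbf{h}_{k,i}^H\,T_{k,i\to l}^{-1},$$ $$\beta=\frac{1}{E_{tx}}\sum_{k=1}^K\sum_{l=1}^L\sum_{i=l}^L\eta_{k,i\to l}\,b_{k,i\to l}\,|V_{k,i\to l}|^2,$$ $$\mathbf{p}_k=\Big[\beta\mathbf{I}+\sum_{l=1}^L\sum_{i=l}^L\sum_{j=l}^L\alpha_{k,j}\eta_{k,i\to l}b_{k,i\to l}\mathbf{h}_{k,i}^H|V_{k,i\to l}|^2\mathbf{h}_{k,i}+\sum_{t=1,t\ne k}^{K}\sum_{l=1}^L\sum_{i=l}^L\eta_{t,i\to l}b_{t,i\to l}\mathbf{h}_{t,i}^H|V_{t,i\to l}|^2\mathbf{h}_{t,i}\Big]^{-1}\Big[\sum_{l=1}^L\sum_{i=l}^L\eta_{k,i\to l}b_{k,i\to l}\alpha_{k,l}\mathbf{h}_{k,i}^H V_{k,i\to l}^{*}\Big]$$ satisfy the KKT conditions of $\mathcal{P}_3$.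
   Context: A base station with $M$ antennas serves $K$ clusters of $L$ single-antenna users each; user $i$ of cluster $k$ has channel row vector $\mathbf{h}_{k,i}\in\mathbb{C}^{1\times M}$. Power fractions satisfy $\alpha_{k,l}>0$, $\sum_{l=1}^L\alpha_{k,l}=1$. The precoder is $\mathbf{P}=[\mathbf{p}_1,\dots,\mathbf{p}_K]\in\mathbb{C}^{M\times K}$ with total power budget $E_{tx}>0$. For $1\le l\le i\le L$ define $r_{k,i\to l}=\sum_{j=l+1}^{L}\alpha_{k,j}|\mathbf{h}_{k,i}\mathbf{p}_k|^2+\sum_{t\ne k}|\mathbf{h}_{k,i}\mathbf{p}_t|^2+1$ and $T_{k,i\to l}=\alpha_{k,l}|\mathbf{h}_{k,i}\mathbf{p}_k|^2+r_{k,i\to l}$. For scalar receivers $V_{k,i\to l}\in\mathbb{C}$ define the MSE $\varepsilon_{k,i\to l}=|V_{k,i\to l}|^2T_{k,i\to l}+\alpha_{k,l}-2\,\mathrm{Re}\{\alpha_{k,l}V_{k,i\to l}\mathbf{h}_{k,i}\mathbf{p}_k\}$ and, for weights $b_{k,i\to l}>0$, the augmented weighted MSE $\xi_{k,i\to l}=b_{k,i\to l}\varepsilon_{k,i\to l}-\log(\alpha_{k,l}b_{k,i\to l})$. Problem $\mathcal{P}_3$: minimize $\bar c$ over $\mathbf{P}$, $\{\xi_{k,l}\}$, $\bar c$, $\{V_{k,i\to l}\}$, $\{b_{k,i\to l}\}$ subject to $\sum_{l=1}^L\xi_{k,l}\le\bar c$ for all $k$; $\xi_{k,i\to l}\le\xi_{k,l}$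 for all $k$ and $l\le i\le L$; $\xi_{k,l}\le\xi^{th}_{k,l}$ for all $k,l$ (given thresholds); $\mathrm{Tr}(\mathbf{P}\mathbf{P}^H)\le E_{tx}$. Its Lagrangian is $h=\bar c-\sum_k\theta_k\bar c+\sum_{k,l}\theta_k\xi_{k,l}+\sum_{k,l}\Gamma_{k,l}(\xi_{k,l}-\xi^{th}_{k,l})+\beta(\mathrm{Tr}(\mathbf{P}\mathbf{P}^H)-E_{tx})+\sum_k\sum_{l=1}^L\sum_{i=l}^L\eta_{k,i\to l}(\xi_{k,i\to l}-\xi_{k,l})$, with nonnegative multipliers $\theta_k,\Gamma_{k,l},\eta_{k,i\to l},\beta$. KKT conditions comprise stationarity of $h$ (complex derivatives with respect to conjugated variables), primal feasibility, dual nonnegativity and complementary slackness. *)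

(* Defs.v *)
From HB Require Import structures.
From mathcomp Require Import all_boot all_order all_algebra.
From mathcomp Require Import complex.
From mathcomp Require Import all_classical all_reals all_analysis.
Set Implicit Arguments. Unset Strict Implicit. Unset Printing Implicit Defensive.
Import Order.TTheory GRing.Theory Num.Theory.
Local Open Scope ring_scope.

Section Defs.
Variable R : realType.
Local Notation C := R[i].
Local Notation toC := (fun x : R => Complex x 0).
Local Notation iC := (Complex (0 : R) 1).

Definition sqn (z : C) : R := complex.Re z ^+ 2 + complex.Im z ^+ 2.

Definition herm m n (A : 'M[C]_(m, n)) : 'M[C]_(n, m) := (map_mx (@conjc R) A)^T.

Variables (M K L : nat).
(* hch k i = h_{k,i} (row vector 1 x M), alpha k l = alpha_{k,l} *)
Variables (hch : 'I_K -> 'I_L -> 'rV[C]_M) (alpha : 'I_K -> 'I_L -> R).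

Definition hp (P : 'M[C]_(M, K)) (k : 'I_K) (i : 'I_L) (t : 'I_K) : C :=
  (hch k i *m col t P) 0 0.

Definition rr (P : 'M[C]_(M, K)) (k : 'I_K) (i l : 'I_L) : R :=
  \sum_(j < L | (l < j)%N) alpha k j * sqn (hp P k i k)
  + \sum_(t < K | t != k) sqn (hp P k i t) + 1.

Definition TT (P : 'M[C]_(M, K)) (k : 'I_K) (i l : 'I_L) : R :=
  alpha k l * sqn (hp P k i k) + rr P k i l.

Definition mse (P : 'M[C]_(M, K)) (v : C) (k : 'I_K) (i l : 'I_L) : R :=
  sqn v * TT P k i l + alpha k l
  - 2 * complex.Re (toC (alpha k l) * v * hp P k i k).

Definition awmse (P : 'M[C]_(M, K)) (v : C) (bw : R) (k : 'I_K) (i l : 'I_L) : R :=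
  bw * mse P v k i l - ln (alpha k l * bw).

(* Tr(P P^H), which is real *)
Definition trPPH (P : 'M[C]_(M, K)) : R := complex.Re (\tr (P *m herm P)).

(* The Lagrangian h of problem P3.  V k i l = V_{k,i->l}, b k i l = b_{k,i->l},
   eta k i l = eta_{k,i->l}; only triples with l <= i enter. *)
Definition lagr (Etx : R) (xith : 'I_K -> 'I_L -> R)
  (P : 'M[C]_(M, K)) (xi : 'I_K -> 'I_L -> R) (cbar : R)
  (V : 'I_K -> 'I_L -> 'I_L -> C) (b : 'I_K -> 'I_L -> 'I_L -> R)
  (theta : 'I_K -> R) (Gam : 'I_K -> 'I_L -> R)
  (eta : 'I_K -> 'I_L -> 'I_L -> R) (beta : R) : R :=
  cbar - \sum_(k < K) theta k * cbar
  + \sum_(k < K) \sum_(l < L) theta k * xi k l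
  + \sum_(k < K) \sum_(l < L) Gam k l * (xi k l - xith k l)
  + beta * (trPPH P - Etx)
  + \sum_(k < K) \sum_(l < L) \sum_(i < L | (l <= i)%N)
      eta k i l * (awmse P (V k i l) (b k i l) k i l - xi k l).

End Defs.

(* Wirtinger calculus for a real-valued function f of one complex variable:
   partial derivatives w.r.t. the real and imaginary parts at z, and the
   conjugate Wirtinger derivative  df/dz^* = (df/dx + i df/dy) / 2. *)
Section Wirtinger.
Variable R : realType.
Local Notation C := R[i].

Definition dRe (f : C -> R) (z : C) : R :=
  derive1 (fun t : R => f (z + Complex t 0)) 0.
Definition dIm (f : C -> R) (z : C) : R :=
  derive1 (fun t : R => f (z + Complex 0 t)) 0.

Definition dconj (f : C -> R) (z : C) : C :=
  (Complex (dRe f z) 0 + Complex 0 1 * Complex (dIm f z) 0) / 2%:R.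

Definition wstationary (f : C -> R) (z : C) : Prop :=
  derivable (fun t : R => f (z + Complex t 0)) 0 1 /\
  derivable (fun t : R => f (z + Complex 0 t)) 0 1 /\
  dconj f z = 0.

End Wirtinger.

Definition updV (T : Type) (K L : nat) (V : 'I_K -> 'I_L -> 'I_L -> T)
  (k : 'I_K) (i l : 'I_L) (v : T) : 'I_K -> 'I_L -> 'I_L -> T :=
  fun k' i' l' => if [&& k' == k, i' == i & l' == l] then v else V k' i' l'.

Definition updM (T : Type) (m n : nat) (A : 'M[T]_(m, n)) (a : 'I_m) (c : 'I_n)
  (z : T) : 'M[T]_(m, n) :=
  \matrix_(x, y) if (x == a) && (y == c) then z else A x y.

(* Main.v *)
Require Import Defs.
From HB Require Import structures.
From mathcomp Require Import all_boot all_order all_algebra.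
From mathcomp Require Import complex.
From mathcomp Require Import all_classical all_reals all_analysis.
From mathcomp Require Import ring lra.
Import Order.TTheory GRing.Theory Num.Theory.
Local Open Scope ring_scope.
Set Implicit Arguments. Unset Strict Implicit. Unset Printing Implicit Defensive.

Section Scalar.
Variable R : realType.
Local Notation C := R[i].

Definition cip (a c : C) : R := complex.Re (conjc a * c).

Lemma cipE (a c : C) : cip a c = complex.Re a * complex.Re c + complex.Im a * complex.Im c.
Proof. case: a c => a1 a2 [c1 c2]; rewrite /cip /=; ring. Qed.

Lemma sqn_diff (a c : C) : sqn (a + c) - sqn (a - c) = 4 * cip c a.
Proof. rewrite cipE; case: a c => a1 a2 [c1 c2]; rewrite /sqn /=; ring. Qed.

Lemma sqn_ge0 (a : C) : 0 <= sqn a.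
Proof. by rewrite /sqn addr_ge0 // sqr_ge0. Qed.

Lemma ReD (x y : C) : complex.Re (x + y) = complex.Re x + complex.Re y.
Proof. by case: x y => a b [c d]. Qed.
Lemma ReN (x : C) : complex.Re (- x) = - complex.Re x.
Proof. by case: x. Qed.
Lemma ReB (x y : C) : complex.Re (x - y) = complex.Re x - complex.Re y.
Proof. by rewrite ReD ReN. Qed.
Lemma Re0 : complex.Re (0 : C) = 0. Proof. by []. Qed.
Lemma Re_sum I (r : seq I) (Pr : pred I) (F : I -> C) :
  complex.Re (\sum_(i <- r | Pr i) F i) = \sum_(i <- r | Pr i) complex.Re (F i).
Proof. exact: (big_morph _ ReD Re0). Qed.

Lemma cipD a x y : cip a (x + y) = cip a x + cip a y.
Proof. by rewrite /cip mulrDr ReD. Qed.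
Lemma cip0 a : cip a 0 = 0. Proof. by rewrite /cip mulr0. Qed.
Lemma cipN a x : cip a (- x) = - cip a x. Proof. by rewrite /cip mulrN ReN. Qed.
Lemma cipB a x y : cip a (x - y) = cip a x - cip a y. Proof. by rewrite cipD cipN. Qed.
Lemma cip_sum a I (r : seq I) (Pr : pred I) (F : I -> C) :
  cip a (\sum_(i <- r | Pr i) F i) = \sum_(i <- r | Pr i) cip a (F i).
Proof. exact: (big_morph _ (cipD a) (cip0 a)). Qed.
Lemma cipDl a b x : cip (a + b) x = cip a x + cip b x.
Proof. by rewrite !cipE ReD; case: a b => ? ? [? ?] /=; ring. Qed.
Lemma cip0l x : cip 0 x = 0. Proof. by rewrite cipE /= !mul0r addr0. Qed.
Lemma cip_suml x I (r : seq I) (Pr : pred I) (F : I -> C) :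
  cip (\sum_(i <- r | Pr i) F i) x = \sum_(i <- r | Pr i) cip (F i) x.
Proof. exact: (big_morph (cip^~ x) (fun a b => cipDl a b x) (cip0l x)). Qed.
Lemma cipZr a (r : R) z : cip a (Complex r 0 * z) = r * cip a z.
Proof. rewrite !cipE; case: a z => ? ? [? ?] /=; ring. Qed.
Lemma cipMconj a h z : cip a (conjc h * z) = cip (h * a) z.
Proof. rewrite !cipE; case: a h z => ? ? [? ?] [? ?] /=; ring. Qed.
Lemma cipC a c : cip a c = cip c a.
Proof. rewrite !cipE; ring. Qed.

Definition quad (g : R -> R) := exists a b c : R, forall t, g t = a + b * t + c * (t * t).

Lemma quad_deriv (a b c : R) :
  derivable (fun t : R => a + b * t + c * (t * t)) 0 1 /\
  derive1 (fun t : R => a + b * t + c * (t * t)) 0 = b.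
Proof.
have h1 := @is_derive_id R R^o (0:R) (1:R).
have h2 := is_deriveZ b h1.
have h3 := is_deriveM h1 h1.
have h4 := is_deriveZ c h3.
have h0 := @is_derive_cst R R^o R^o a (0:R) (1:R).
have h5 := is_deriveD h0 h2.
have h6 := is_deriveD h5 h4.
move: h6; set F := (_ + _ + _) => h6.
have E : (fun t : R => a + b * t + c * (t * t)) = F.
  by apply/funext => t.
rewrite E; split; first exact: ex_derive.
rewrite derive1E derive_val /=.
rewrite !scale0r addr0 scaler0 addr0 add0r. by rewrite /GRing.scale /= mulr1.
Qed.

Lemma quadP g : quad g -> g 1 = g (-1) -> derivable g 0 1 /\ derive1 g 0 = 0.
Proof.
move=> [a [b [c H]]] E.
have -> : g = (fun t : R => a + b * t + c * (t * t)) by apply/funext.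
have [D1 D2] := quad_deriv a b c; split => //; rewrite D2.
move: E; rewrite !H; move=> E.
rewrite !mulr1 !mulrN1 opprK in E; lra.
Qed.

Lemma quad_cst r : quad (fun _ => r).
Proof. by exists r, 0, 0 => t; rewrite !mul0r !addr0. Qed.
Lemma quad_lin (a b : R) : quad (fun t => a + b * t).
Proof. by exists a, b, 0 => t; rewrite mul0r addr0. Qed.
Lemma quadD f g : quad f -> quad g -> quad (fun t => f t + g t).
Proof.
move=> [a [b [c H]]] [a' [b' [c' H']]]; exists (a + a'), (b + b'), (c + c') => t.
rewrite H H'; ring.
Qed.
Lemma quadN f : quad f -> quad (fun t => - f t).
Proof. move=> [a [b [c H]]]; exists (-a), (-b), (-c) => t; rewrite H; ring. Qed.
Lemma quadB f g : quad f -> quad g -> quad (fun t => f t - g t).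
Proof. by move=> ? ?; apply: quadD => //; apply: quadN. Qed.
Lemma quadZ r f : quad f -> quad (fun t => r * f t).
Proof. move=> [a [b [c H]]]; exists (r * a), (r * b), (r * c) => t; rewrite H; ring. Qed.
Lemma quadZr r f : quad f -> quad (fun t => f t * r).
Proof. move=> [a [b [c H]]]; exists (r * a), (r * b), (r * c) => t; rewrite H; ring. Qed.
Lemma quad_sum I (r : seq I) (Pr : pred I) (F : I -> R -> R) :
  (forall i, quad (F i)) -> quad (fun t => \sum_(i <- r | Pr i) F i t).
Proof.
move=> H; elim: r => [|x r IH].
  by under eq_fun do rewrite big_nil; apply: quad_cst.
under eq_fun do rewrite big_cons.
case: (Pr x); last exact: IH.
exact: quadD.
Qed.
Lemma quad_sqn (z w : C) : quad (fun t => sqn (z + Complex t 0 * w)).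
Proof.
case: z w => a b [c d]; rewrite /sqn /=.
exists (a ^+ 2 + b ^+ 2), (2 * (a * c + b * d)), (c ^+ 2 + d ^+ 2) => t; ring.
Qed.
Lemma quad_Re (z w : C) : quad (fun t => complex.Re (z + Complex t 0 * w)).
Proof. case: z w => a b [c d] /=; exists a, c, 0 => t; ring. Qed.

Lemma quad_ext g f : (forall t, f t = g t) -> quad g -> quad f.
Proof. by move=> E [a [b [c H]]]; exists a, b, c => t; rewrite E H. Qed.
Lemma quad_Re2 (a x y : C) : quad (fun t => complex.Re (a * (x + Complex t 0 * y))).
Proof.
case: a x y => a1 a2 [x1 x2] [y1 y2] /=.
exists (a1 * x1 - a2 * x2), (a1 * y1 - a2 * y2), 0 => t; ring.
Qed.
Lemma quad_Re3 (a h v w : C) : quad (fun t => complex.Re (a * (v + Complex t 0 * w) * h)).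
Proof.
apply: (quad_ext (g := fun t => complex.Re ((a * h) * (v + Complex t 0 * w)))).
  by move=> t; rewrite mulrAC.
exact: quad_Re2.
Qed.
Lemma ReMD (a x y : C) : complex.Re (a * (x + y)) = complex.Re (a * x) + complex.Re (a * y).
Proof. by rewrite mulrDr ReD. Qed.
Lemma ReMB (a x y : C) : complex.Re (a * (x - y)) = complex.Re (a * x) - complex.Re (a * y).
Proof. by rewrite mulrBr ReB. Qed.
Lemma sqnE (z : C) : complex.Re (z * conjc z) = sqn z.
Proof. case: z => a b; rewrite /sqn /=; ring. Qed.

Lemma c1m (d : C) : Complex 1 0 * d = d.
Proof. by case: d => ? ? /=; congr Complex; ring. Qed.
Lemma cm1m (d : C) : Complex (-1) 0 * d = - d.
Proof. by case: d => ? ? /=; congr Complex; ring. Qed.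

Lemma ws_dir (f : C -> R) z :
  (forall d, quad (fun t => f (z + Complex t 0 * d))) ->
  (forall d, f (z + d) = f (z - d)) -> wstationary f z.
Proof.
move=> Hq Hs.
have E1 : (fun t => f (z + Complex t 0)) = (fun t => f (z + Complex t 0 * 1)).
  by apply/funext => t; rewrite mulr1.
have E2 : (fun t => f (z + Complex 0 t)) = (fun t => f (z + Complex t 0 * Complex 0 1)).
  apply/funext => t; congr (f (z + _)) => /=; congr Complex; ring.
have [D1 d1] := quadP (Hq 1) (etrans (congr1 f (congr1 (fun w => z + w) (c1m 1)))
   (etrans (Hs 1) (congr1 f (congr1 (fun w => z + w) (esym (cm1m 1)))))).
have [D2 d2] := quadP (Hq (Complex 0 1))
   (etrans (congr1 f (congr1 (fun w => z + w) (c1m _)))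
   (etrans (Hs _) (congr1 f (congr1 (fun w => z + w) (esym (cm1m _)))))).
rewrite /wstationary E1 E2; split => //; split => //.
rewrite /dconj /dRe /dIm E1 E2 d1 d2.
have -> : Complex (0:R) 0 = 0 by [].
by rewrite mulr0 addr0 mul0r.
Qed.

Lemma Vsym (a T : R) (h d : C) : 0 < T ->
  let z := Complex a 0 * conjc h / Complex T 0 in
  sqn (z + d) * T + a - 2 * complex.Re (Complex a 0 * (z + d) * h)
  = sqn (z - d) * T + a - 2 * complex.Re (Complex a 0 * (z - d) * h).
Proof.
move=> hT; rewrite /=; case: h d => h1 h2 [d1 d2]; rewrite /sqn /=.
have hT0 : T != 0 by rewrite gt_eqF.
rewrite expr0n /= !mul0r !addr0; field; exact: hT0.
Qed.

Lemma ReVsc (a T : R) (h : C) : 0 < T ->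
  let z := Complex a 0 * conjc h / Complex T 0 in
  complex.Re (Complex a 0 * z * h) = sqn z * T.
Proof.
move=> hT; rewrite /=; case: h => h1 h2; rewrite /sqn /=.
have hT0 : T != 0 by rewrite gt_eqF.
rewrite expr0n /= !mul0r !addr0; field; exact: hT0.
Qed.

Lemma cip_self x : cip x x = sqn x.
Proof. by rewrite cipE /sqn !expr2. Qed.

Lemma sqn_eq0 (z : C) : sqn z = 0 -> z = 0.
Proof.
case: z => a b; rewrite /sqn /= => H.
have ha : a = 0 by nra.
have hb : b = 0 by nra.
by rewrite ha hb.
Qed.

Lemma sqn2 (a : C) : sqn (a + a) = 4 * sqn a.
Proof. case: a => ? ?; rewrite /sqn /=; ring. Qed.

End Scalar.

Section Main.
Variables (R : realType) (M K L : nat).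
Variables (hch : 'I_K -> 'I_L -> 'rV[R[i]]_M) (alpha : 'I_K -> 'I_L -> R).
Local Notation C := R[i].
Local Notation hp := (hp hch).
Local Notation TT := (TT hch alpha).
Local Notation mse := (mse hch alpha).
Local Notation lagr := (lagr hch alpha).
Local Notation toC := (fun x : R => Complex x 0).

Lemma hpE (P : 'M[C]_(M, K)) k i t : hp P k i t = \sum_(m < M) hch k i 0 m * P m t.
Proof. by rewrite /Defs.hp !mxE; apply: eq_bigr => m _; rewrite !mxE. Qed.

Lemma hpD (P Q : 'M[C]_(M, K)) k i t : hp (P + Q) k i t = hp P k i t + hp Q k i t.
Proof. by rewrite !hpE -big_split; apply: eq_bigr => m _; rewrite mxE mulrDr. Qed.
Lemma hpN (P : 'M[C]_(M, K)) k i t : hp (- P) k i t = - hp P k i t.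
Proof. by rewrite !hpE -sumrN; apply: eq_bigr => m _; rewrite mxE mulrN. Qed.
Lemma hpB (P Q : 'M[C]_(M, K)) k i t : hp (P - Q) k i t = hp P k i t - hp Q k i t.
Proof. by rewrite hpD hpN. Qed.
Lemma hpZ (c : C) (P : 'M[C]_(M, K)) k i t : hp (c *: P) k i t = c * hp P k i t.
Proof. by rewrite !hpE mulr_sumr; apply: eq_bigr => m _; rewrite mxE mulrCA. Qed.

Lemma hp_line (P D : 'M[C]_(M, K)) (c : C) :
  hp (P + c *: D) = fun k i t => hp P k i t + c * hp D k i t.
Proof. by apply/funext => k; apply/funext => i; apply/funext => t; rewrite hpD hpZ. Qed.

Lemma trPPH_E (X : 'M[C]_(M, K)) : trPPH X = \sum_(m < M) \sum_(k < K) sqn (X m k).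
Proof.
rewrite /trPPH /mxtrace Re_sum; apply: eq_bigr => m _.
rewrite mxE Re_sum; apply: eq_bigr => k _.
by rewrite /herm !mxE sqnE.
Qed.

Lemma mseE (P : 'M[C]_(M, K)) v k i l : mse P v k i l =
  sqn v * (alpha k l * sqn (hp P k i k) +
    (\sum_(j < L | (l < j)%N) alpha k j * sqn (hp P k i k)
     + \sum_(t < K | t != k) sqn (hp P k i t) + 1))
  + alpha k l - 2 * complex.Re (toC (alpha k l) * v * hp P k i k).
Proof. by []. Qed.

Lemma quad_mse_P (P D : 'M[C]_(M, K)) v k i l :
  quad (fun t => mse (P + Complex t 0 *: D) v k i l).
Proof.
rewrite /Defs.mse /Defs.TT /Defs.rr.
under eq_fun => t do rewrite hp_line.
apply: quadB; last by apply: quadZ; apply: quad_Re2.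
apply: quadD; last exact: quad_cst.
apply: quadZ; apply: quadD; first by apply: quadZ; apply: quad_sqn.
apply: quadD; last exact: quad_cst.
apply: quadD; first by apply: quad_sum => j; apply: quadZ; apply: quad_sqn.
by apply: quad_sum => j; apply: quad_sqn.
Qed.

Lemma quad_mse_V (P : 'M[C]_(M, K)) v w k i l :
  quad (fun t => mse P (v + Complex t 0 * w) k i l).
Proof.
rewrite /Defs.mse.
apply: quadB; last by apply: quadZ; apply: quad_Re3.
apply: quadD; last exact: quad_cst.
by apply: quadZr; apply: quad_sqn.
Qed.

Lemma quad_trPPH (P D : 'M[C]_(M, K)) : quad (fun t => trPPH (P + Complex t 0 *: D)).
Proof.
under eq_fun => t do rewrite trPPH_E.
apply: quad_sum => m; apply: quad_sum => k.
apply: (quad_ext (g := fun t => sqn (P m k + Complex t 0 * D m k))); last exact: quad_sqn.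
by move=> t; rewrite !mxE.
Qed.

Lemma quad_lagr Etx xith (Pt : R -> 'M[C]_(M, K)) xi cbar
   (Vt : R -> 'I_K -> 'I_L -> 'I_L -> C) b theta Gam eta beta :
  quad (fun t => trPPH (Pt t)) ->
  (forall k i l, quad (fun t => mse (Pt t) (Vt t k i l) k i l)) ->
  quad (fun t => lagr Etx xith (Pt t) xi cbar (Vt t) b theta Gam eta beta).
Proof.
move=> Htr Hm; rewrite /Defs.lagr.
apply: quadD; last first.
  apply: quad_sum => k; apply: quad_sum => l; apply: quad_sum => i.
  apply: quadZ; apply: quadB; last exact: quad_cst.
  rewrite /awmse; apply: quadB; last exact: quad_cst.
  by apply: quadZ.
apply: quadD; last by apply: quadZ; apply: quadB => //; apply: quad_cst.
by apply: quad_cst.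
Qed.

Definition S3 (F : 'I_K -> 'I_L -> 'I_L -> R) :=
  \sum_(k < K) \sum_(l < L) \sum_(i < L | (l <= i)%N) F k i l.

Lemma S3_ext F G : (forall k i l, (l <= i)%N -> F k i l = G k i l) -> S3 F = S3 G.
Proof.
move=> H; rewrite /S3; apply: eq_bigr => k _; apply: eq_bigr => l _.
by apply: eq_bigr => i /H.
Qed.
Lemma S3D F G : S3 (fun k i l => F k i l + G k i l) = S3 F + S3 G.
Proof.
rewrite /S3 -big_split; apply: eq_bigr => k _; rewrite -big_split.
by apply: eq_bigr => l _; rewrite -big_split.
Qed.
Lemma S3N F : S3 (fun k i l => - F k i l) = - S3 F.
Proof.
rewrite /S3 -sumrN; apply: eq_bigr => k _; rewrite -sumrN.
by apply: eq_bigr => l _; rewrite -sumrN.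
Qed.
Lemma S3B F G : S3 (fun k i l => F k i l - G k i l) = S3 F - S3 G.
Proof. by rewrite S3D S3N. Qed.
Lemma S3Z c F : S3 (fun k i l => c * F k i l) = c * S3 F.
Proof.
rewrite /S3 mulr_sumr; apply: eq_bigr => k _; rewrite mulr_sumr.
by apply: eq_bigr => l _; rewrite mulr_sumr.
Qed.

Lemma lagr_diff Etx xith P1 P2 xi cbar V1 V2 b theta Gam eta beta :
  lagr Etx xith P1 xi cbar V1 b theta Gam eta beta
  - lagr Etx xith P2 xi cbar V2 b theta Gam eta beta
  = beta * (trPPH P1 - trPPH P2) +
    S3 (fun k i l =>
      eta k i l * b k i l * (mse P1 (V1 k i l) k i l - mse P2 (V2 k i l) k i l)).
Proof.
rewrite /Defs.lagr /S3.
set S1 := \sum_(k < K) \sum_(l < L) \sum_(i < L | (l <= i)%N) _.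
set S2 := \sum_(k < K) \sum_(l < L) \sum_(i < L | (l <= i)%N) _.
set S3 := \sum_(k < K) \sum_(l < L) \sum_(i < L | (l <= i)%N) _.
have E : S1 - S2 = S3.
  rewrite /S1 /S2 /S3 -sumrB; apply: eq_bigr => k _; rewrite -sumrB.
  apply: eq_bigr => l _; rewrite -sumrB; apply: eq_bigr => i _.
  rewrite /awmse; ring.
rewrite -E; ring.
Qed.


Lemma hpD_fun (P Q : 'M[C]_(M, K)) : hp (P + Q) = fun k i t => hp P k i t + hp Q k i t.
Proof. by apply/funext => k; apply/funext => i; apply/funext => t; rewrite hpD. Qed.
Lemma hpB_fun (P Q : 'M[C]_(M, K)) : hp (P - Q) = fun k i t => hp P k i t - hp Q k i t.
Proof. by apply/funext => k; apply/funext => i; apply/funext => t; rewrite hpB. Qed.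

Lemma sqnD' (a c : C) : sqn (a + c) = sqn (a - c) + 4 * cip c a.
Proof. by rewrite -sqn_diff; ring. Qed.

Lemma sum_sqnD I (r : seq I) (Pr : pred I) (F G : I -> C) :
  \sum_(t <- r | Pr t) sqn (F t + G t) =
  \sum_(t <- r | Pr t) sqn (F t - G t) + 4 * \sum_(t <- r | Pr t) cip (G t) (F t).
Proof. by rewrite mulr_sumr -big_split; apply: eq_bigr => t _; rewrite sqnD'. Qed.

Lemma mse_diff (P D : 'M[C]_(M, K)) v k i l :
  mse (P + D) v k i l - mse (P - D) v k i l =
  4 * (sqn v * ((alpha k l + \sum_(j < L | (l < j)%N) alpha k j) * cip (hp D k i k) (hp P k i k)
               + \sum_(t < K | t != k) cip (hp D k i t) (hp P k i t))
       - complex.Re (toC (alpha k l) * v * hp D k i k)).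
Proof.
rewrite !mseE hpD_fun hpB_fun /=.
rewrite (@sum_sqnD _ _ _ (fun t => hp P k i t) (fun t => hp D k i t)) -!mulr_suml.
rewrite (sqnD' (hp P k i k) (hp D k i k)).
rewrite ReMD ReMB.
ring.
Qed.




Definition ipc (x y : 'cV[C]_M) : R := \sum_(m < M) cip (x m 0) (y m 0).

Lemma ipcD x y z : ipc x (y + z) = ipc x y + ipc x z.
Proof. by rewrite /ipc -big_split; apply: eq_bigr => m _; rewrite mxE cipD. Qed.
Lemma ipc0 x : ipc x 0 = 0.
Proof. by rewrite /ipc big1 // => m _; rewrite mxE cip0. Qed.
Lemma ipcN x y : ipc x (- y) = - ipc x y.
Proof. by rewrite /ipc -sumrN; apply: eq_bigr => m _; rewrite mxE cipN. Qed.
Lemma ipcB x y z : ipc x (y - z) = ipc x y - ipc x z.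
Proof. by rewrite ipcD ipcN. Qed.
Lemma ipc_sum x I (r : seq I) (Pr : pred I) (F : I -> 'cV[C]_M) :
  ipc x (\sum_(i <- r | Pr i) F i) = \sum_(i <- r | Pr i) ipc x (F i).
Proof. exact: (big_morph _ (ipcD x) (ipc0 x)). Qed.
Lemma ipcZ x (r : R) y : ipc x (Complex r 0 *: y) = r * ipc x y.
Proof. by rewrite /ipc mulr_sumr; apply: eq_bigr => m _; rewrite mxE cipZr. Qed.
Lemma ipc_scal x (r : R) y : ipc x ((Complex r 0)%:M *m y) = r * ipc x y.
Proof. by rewrite mul_scalar_mx ipcZ. Qed.
Lemma ipc_hh x (h : 'rV[C]_M) y :
  ipc x (herm h *m (h *m y)) = cip ((h *m x) 0 0) ((h *m y) 0 0).
Proof.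
rewrite /ipc [(h *m x) 0 0]mxE cip_suml; apply: eq_bigr => m _.
by rewrite mxE big_ord1 /herm !mxE cipMconj mulrC.
Qed.
Lemma ipc_h x (h : 'rV[C]_M) c : ipc x (c *: herm h) = cip ((h *m x) 0 0) c.
Proof.
rewrite /ipc [(h *m x) 0 0]mxE cip_suml; apply: eq_bigr => m _.
by rewrite /herm !mxE mulrC cipMconj mulrC.
Qed.
Lemma cip_conj (a v : C) : cip a (conjc v) = complex.Re (v * a).
Proof. rewrite cipE; case: a v => ? ? [? ?] /=; ring. Qed.

Definition Amat (V : 'I_K -> 'I_L -> 'I_L -> C) (b eta : 'I_K -> 'I_L -> 'I_L -> R)
  (beta : R) (k : 'I_K) : 'M[C]_M :=
       (Complex beta 0)%:M
       + \sum_(l < L) \sum_(i < L | (l <= i)%N) \sum_(j < L | (l <= j)%N)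
           Complex (alpha k j * eta k i l * b k i l * sqn (V k i l)) 0
             *: (herm (hch k i) *m hch k i)
       + \sum_(t < K | t != k) \sum_(l < L) \sum_(i < L | (l <= i)%N)
           Complex (eta t i l * b t i l * sqn (V t i l)) 0
             *: (herm (hch t i) *m hch t i).

Definition rhsv (V : 'I_K -> 'I_L -> 'I_L -> C) (b eta : 'I_K -> 'I_L -> 'I_L -> R)
  (k : 'I_K) : 'cV[C]_M :=
       \sum_(l < L) \sum_(i < L | (l <= i)%N)
         (Complex (eta k i l * b k i l * alpha k l) 0 * conjc (V k i l))
           *: herm (hch k i).

Lemma ipc_A V b eta beta k (P D : 'M[C]_(M, K)) :
  ipc (col k D) (Amat V b eta beta k *m col k P) =
  beta * ipc (col k D) (col k P)
  + \sum_(l < L) \sum_(i < L | (l <= i)%N) \sum_(j < L | (l <= j)%N)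
       (alpha k j * eta k i l * b k i l * sqn (V k i l)) * cip (hp D k i k) (hp P k i k)
  + \sum_(t < K | t != k) \sum_(l < L) \sum_(i < L | (l <= i)%N)
       (eta t i l * b t i l * sqn (V t i l)) * cip (hp D t i k) (hp P t i k).
Proof.
rewrite /Amat !mulmxDl !ipcD ipc_scal; congr (_ + _ + _).
  rewrite mulmx_suml ipc_sum; apply: eq_bigr => l _.
  rewrite mulmx_suml ipc_sum; apply: eq_bigr => i _.
  rewrite mulmx_suml ipc_sum; apply: eq_bigr => j _.
  by rewrite -scalemxAl ipcZ -mulmxA ipc_hh.
rewrite mulmx_suml ipc_sum; apply: eq_bigr => t _.
rewrite mulmx_suml ipc_sum; apply: eq_bigr => l _.
rewrite mulmx_suml ipc_sum; apply: eq_bigr => i _.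
by rewrite -scalemxAl ipcZ -mulmxA ipc_hh.
Qed.

Lemma ipc_rhs V b eta k (D : 'M[C]_(M, K)) :
  ipc (col k D) (rhsv V b eta k) =
  \sum_(l < L) \sum_(i < L | (l <= i)%N)
     eta k i l * b k i l * complex.Re (toC (alpha k l) * V k i l * hp D k i k).
Proof.
rewrite /rhsv ipc_sum; apply: eq_bigr => l _.
rewrite ipc_sum; apply: eq_bigr => i _.
rewrite ipc_h cipZr cip_conj.
have -> : complex.Re (toC (alpha k l) * V k i l * hp D k i k)
   = alpha k l * complex.Re (V k i l * hp D k i k).
  by case: (V k i l) (hp D k i k) => ? ? [? ?] /=; ring.
rewrite /Defs.hp; ring.
Qed.

Lemma trPPH_diff (P D : 'M[C]_(M, K)) :
  trPPH (P + D) - trPPH (P - D) = 4 * \sum_(k < K) ipc (col k D) (col k P).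
Proof.
rewrite !trPPH_E -sumrB.
transitivity (\sum_(m < M) \sum_(k < K) 4 * cip (D m k) (P m k)).
  apply: eq_bigr => m _; rewrite -sumrB; apply: eq_bigr => k _.
  by rewrite !mxE sqn_diff.
rewrite exchange_big mulr_sumr; apply: eq_bigr => k _.
by rewrite /ipc mulr_sumr; apply: eq_bigr => m _; rewrite !mxE.
Qed.


Lemma sum_neq_swap (F : 'I_K -> 'I_K -> R) :
  \sum_(k < K) \sum_(t < K | t != k) F k t = \sum_(k < K) \sum_(t < K | t != k) F t k.
Proof.
under eq_bigr do rewrite big_mkcond.
rewrite exchange_big; apply: eq_bigr => t _; rewrite [RHS]big_mkcond /=.
by apply: eq_bigr => k _; rewrite eq_sym.
Qed.

Lemma sum_ge_split (l : 'I_L) (f : 'I_L -> R) :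
  \sum_(j < L | (l <= j)%N) f j = f l + \sum_(j < L | (l < j)%N) f j.
Proof.
rewrite (bigD1 l) //=; congr (_ + _); apply: eq_bigl => j.
by rewrite ltn_neqAle andbC eq_sym.
Qed.

Lemma leaf1 (l : 'I_L) (a : 'I_L -> R) (e bb s c : R) :
  \sum_(j < L | (l <= j)%N) (a j * e * bb * s) * c
  = e * bb * s * ((a l + \sum_(j < L | (l < j)%N) a j) * c).
Proof.
rewrite (sum_ge_split l (fun j => a j * e * bb * s * c)) /=.
have -> : \sum_(j < L | (l < j)%N) a j * e * bb * s * c
        = (\sum_(j < L | (l < j)%N) a j) * (e * bb * s * c).
  by rewrite mulr_suml; apply: eq_bigr => j _; ring.
ring.
Qed.

Lemma key V b eta beta (P D : 'M[C]_(M, K)) Etx xith xi cbar theta Gam :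
  lagr Etx xith (P + D) xi cbar V b theta Gam eta beta
  - lagr Etx xith (P - D) xi cbar V b theta Gam eta beta
  = 4 * \sum_(k < K) ipc (col k D) (Amat V b eta beta k *m col k P - rhsv V b eta k).
Proof.
rewrite lagr_diff trPPH_diff.
have -> : S3 (fun k i l => eta k i l * b k i l *
            (mse (P + D) (V k i l) k i l - mse (P - D) (V k i l) k i l))
  = 4 * (S3 (fun k i l => eta k i l * b k i l * sqn (V k i l) *
              ((alpha k l + \sum_(j < L | (l < j)%N) alpha k j) * cip (hp D k i k) (hp P k i k)))
        + S3 (fun k i l => eta k i l * b k i l * sqn (V k i l) *
              \sum_(t < K | t != k) cip (hp D k i t) (hp P k i t))
        - S3 (fun k i l => eta k i l * b k i l *
              complex.Re (toC (alpha k l) * V k i l * hp D k i k))).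
  rewrite -S3D -S3B -S3Z /S3; apply: eq_bigr => k _; apply: eq_bigr => l _; apply: eq_bigr => i _.
  rewrite mse_diff; ring.
have -> : \sum_(k < K) ipc (col k D) (Amat V b eta beta k *m col k P - rhsv V b eta k)
  = beta * \sum_(k < K) ipc (col k D) (col k P)
    + \sum_(k < K) \sum_(l < L) \sum_(i < L | (l <= i)%N) \sum_(j < L | (l <= j)%N)
       (alpha k j * eta k i l * b k i l * sqn (V k i l)) * cip (hp D k i k) (hp P k i k)
    + \sum_(k < K) \sum_(t < K | t != k) \sum_(l < L) \sum_(i < L | (l <= i)%N)
       (eta t i l * b t i l * sqn (V t i l)) * cip (hp D t i k) (hp P t i k)
    - \sum_(k < K) \sum_(l < L) \sum_(i < L | (l <= i)%N)
     eta k i l * b k i l * complex.Re (toC (alpha k l) * V k i l * hp D k i k).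
  under eq_bigr => k _ do rewrite ipcB ipc_A ipc_rhs.
  by rewrite sumrB !big_split /= -mulr_sumr.
have -> : \sum_(k < K) \sum_(l < L) \sum_(i < L | (l <= i)%N) \sum_(j < L | (l <= j)%N)
       (alpha k j * eta k i l * b k i l * sqn (V k i l)) * cip (hp D k i k) (hp P k i k)
  = S3 (fun k i l => eta k i l * b k i l * sqn (V k i l) *
              ((alpha k l + \sum_(j < L | (l < j)%N) alpha k j) * cip (hp D k i k) (hp P k i k))).
  rewrite /S3; apply: eq_bigr => k _; apply: eq_bigr => l _; apply: eq_bigr => i _.
  exact: leaf1.
have -> : \sum_(k < K) \sum_(t < K | t != k) \sum_(l < L) \sum_(i < L | (l <= i)%N)
       (eta t i l * b t i l * sqn (V t i l)) * cip (hp D t i k) (hp P t i k)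
  = S3 (fun k i l => eta k i l * b k i l * sqn (V k i l) *
              \sum_(t < K | t != k) cip (hp D k i t) (hp P k i t)).
  rewrite (sum_neq_swap (fun k t => \sum_(l < L) \sum_(i < L | (l <= i)%N)
       (eta t i l * b t i l * sqn (V t i l)) * cip (hp D t i k) (hp P t i k))) /=.
  rewrite /S3; apply: eq_bigr => k _; rewrite exchange_big /=; apply: eq_bigr => l _.
  rewrite exchange_big /=; apply: eq_bigr => i _.
  by rewrite mulr_sumr.
rewrite /S3; ring.
Qed.

Lemma TT_gt0 (ha : forall k l, 0 < alpha k l) P k i l : 0 < TT P k i l.
Proof.
rewrite /Defs.TT /Defs.rr.
have h1 : 0 <= alpha k l * sqn (hp P k i k) by apply: mulr_ge0; [exact: ltW | exact: sqn_ge0].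
have h2 : 0 <= \sum_(j < L | (l < j)%N) alpha k j * sqn (hp P k i k).
  by apply: sumr_ge0 => j _; apply: mulr_ge0; [exact: ltW | exact: sqn_ge0].
have h3 : 0 <= \sum_(t < K | t != k) sqn (hp P k i t).
  by apply: sumr_ge0 => j _; exact: sqn_ge0.
lra.
Qed.

Lemma mse_sym P k i l z d : 0 < TT P k i l ->
  z = toC (alpha k l) * conjc (hp P k i k) / toC (TT P k i l) ->
  mse P (z + d) k i l = mse P (z - d) k i l.
Proof.
move=> hT ->; rewrite /Defs.mse.
move: (TT P k i l) hT => T hT.
move: (alpha k l) (hp P k i k) => a h.
exact: Vsym.
Qed.

Lemma ReV P k i l z : 0 < TT P k i l ->
  z = toC (alpha k l) * conjc (hp P k i k) / toC (TT P k i l) ->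
  complex.Re (toC (alpha k l) * z * hp P k i k) = sqn z * TT P k i l.
Proof.
move=> hT ->.
move: (TT P k i l) hT => T hT.
move: (alpha k l) (hp P k i k) => a h.
exact: ReVsc.
Qed.

Definition Wd (k : 'I_K) (i l : 'I_L) (d : C) : 'I_K -> 'I_L -> 'I_L -> C :=
  fun k' i' l' => if [&& k' == k, i' == i & l' == l] then d else 0.

Lemma updV_line (V : 'I_K -> 'I_L -> 'I_L -> C) k i l (c d : C) :
  updV V k i l (V k i l + c * d) = fun k' i' l' => V k' i' l' + c * Wd k i l d k' i' l'.
Proof.
apply/funext => k'; apply/funext => i'; apply/funext => l'.
rewrite /updV /Wd; case: ifP => [/and3P [/eqP -> /eqP -> /eqP ->] | _] //.
by rewrite mulr0 addr0.
Qed.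

Definition Dm (m : 'I_M) (k : 'I_K) (d : C) : 'M[C]_(M, K) :=
  \matrix_(x, y) if (x == m) && (y == k) then d else 0.

Lemma updM_line (P : 'M[C]_(M, K)) m k (c : C) : updM P m k (P m k + c) = P + Dm m k c.
Proof.
apply/matrixP => x y; rewrite !mxE.
by case: ifP => [/andP [/eqP -> /eqP ->] | _] //; rewrite addr0.
Qed.
Lemma updM_lineB (P : 'M[C]_(M, K)) m k (c : C) : updM P m k (P m k - c) = P - Dm m k c.
Proof.
apply/matrixP => x y; rewrite !mxE.
by case: ifP => [/andP [/eqP -> /eqP ->] | _] //; rewrite subr0.
Qed.
Lemma Dm_scale m k (c d : C) : Dm m k (c * d) = c *: Dm m k d.
Proof.
apply/matrixP => x y; rewrite !mxE.
by case: ifP => _ //; rewrite mulr0.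
Qed.

Lemma S3_zero F : S3 F = 0 ->
  (forall (k : 'I_K) (i l : 'I_L), (l <= i)%N -> 0 <= F k i l) ->
  forall (k : 'I_K) (i l : 'I_L), (l <= i)%N -> F k i l = 0.
Proof.
move=> H0 Hge k i l hli.
have G1 : forall (k : 'I_K) (l : 'I_L), 0 <= \sum_(i < L | (l <= i)%N) F k i l.
  by move=> k' l'; apply: sumr_ge0 => i' /Hge.
have G2 : forall (k : 'I_K), 0 <= \sum_(l < L) \sum_(i < L | (l <= i)%N) F k i l.
  by move=> k'; apply: sumr_ge0 => l' _.
move: H0; rewrite /S3 => /(psumr_eq0P (fun k' _ => G2 k')) /(_ k isT).
move/(psumr_eq0P (fun l' _ => G1 k l')) /(_ l isT).
by move/(psumr_eq0P (fun i' hi => Hge k i' l hi)) /(_ i hli).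
Qed.

End Main.

Theorem theorem1 (R : realType) (M K L : nat)
  (hch : 'I_K -> 'I_L -> 'rV[R[i]]_M) (alpha : 'I_K -> 'I_L -> R)
  (Etx : R) (xith : 'I_K -> 'I_L -> R)
  (P : 'M[R[i]]_(M, K)) (xi : 'I_K -> 'I_L -> R) (cbar : R)
  (V : 'I_K -> 'I_L -> 'I_L -> R[i]) (b : 'I_K -> 'I_L -> 'I_L -> R)
  (theta : 'I_K -> R) (Gam : 'I_K -> 'I_L -> R)
  (eta : 'I_K -> 'I_L -> 'I_L -> R) (beta : R) :
  (* standing assumptions *)
  (forall (k : 'I_K) (l : 'I_L), 0 < alpha k l) ->
  (forall k : 'I_K, \sum_(l < L) alpha k l = 1) ->
  0 < Etx ->
  (forall (k : 'I_K) (i l : 'I_L), (l <= i)%N -> 0 < b k i l) ->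
  (forall k : 'I_K, 0 <= theta k) ->
  (forall (k : 'I_K) (l : 'I_L), 0 <= Gam k l) ->
  (forall (k : 'I_K) (i l : 'I_L), (l <= i)%N -> 0 <= eta k i l) ->
  (* receivers  V_{k,i->l} = alpha_{k,l} p_k^H h_{k,i}^H T_{k,i->l}^{-1} *)
  (forall (k : 'I_K) (i l : 'I_L), (l <= i)%N ->
     V k i l = Complex (alpha k l) 0 * conjc (hp hch P k i k)
               / Complex (TT hch alpha P k i l) 0) ->
  (* multiplier beta *)
  beta = Etx^-1 * \sum_(k < K) \sum_(l < L) \sum_(i < L | (l <= i)%N)
                    eta k i l * b k i l * sqn (V k i l) ->
  (* precoders  p_k = [A_k]^{-1} [rhs_k]  (the bracketed matrix is invertible) *)
  (forall k : 'I_K,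
     let A : 'M[R[i]]_M :=
       (Complex beta 0)%:M
       + \sum_(l < L) \sum_(i < L | (l <= i)%N) \sum_(j < L | (l <= j)%N)
           Complex (alpha k j * eta k i l * b k i l * sqn (V k i l)) 0
             *: (herm (hch k i) *m hch k i)
       + \sum_(t < K | t != k) \sum_(l < L) \sum_(i < L | (l <= i)%N)
           Complex (eta t i l * b t i l * sqn (V t i l)) 0
             *: (herm (hch t i) *m hch t i) in
     let rhs : 'cV[R[i]]_M :=
       \sum_(l < L) \sum_(i < L | (l <= i)%N)
         (Complex (eta k i l * b k i l * alpha k l) 0 * conjc (V k i l))
           *: herm (hch k i) in
     A \in unitmx /\ col k P = invmx A *m rhs) ->
  (* KKT conditions involving V, P and beta *)
  (forall (k : 'I_K) (i l : 'I_L), (l <= i)%N ->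
     wstationary (fun v => lagr hch alpha Etx xith P xi cbar
                             (updV V k i l v) b theta Gam eta beta) (V k i l)) /\
  (forall (m : 'I_M) (k : 'I_K),
     wstationary (fun z => lagr hch alpha Etx xith (updM P m k z) xi cbar
                             V b theta Gam eta beta) (P m k)) /\
  trPPH P <= Etx /\
  0 <= beta /\
  beta * (trPPH P - Etx) = 0.
Proof.
move=> Ha Hsum HE Hb Hth HG Heta HV Hbeta HP.
have HTT := TT_gt0 hch Ha.
have Hkey : forall k, Amat hch alpha V b eta beta k *m col k P = rhsv hch alpha V b eta k.
  move=> k.
  have [Hu Hc] : Amat hch alpha V b eta beta k \in unitmx /\
     col k P = invmx (Amat hch alpha V b eta beta k) *m rhsv hch alpha V b eta k := HP k.
  by rewrite Hc mulmxA mulmxV // mul1mx.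
have HkeyP : forall D, lagr hch alpha Etx xith (P + D) xi cbar V b theta Gam eta beta
                     = lagr hch alpha Etx xith (P - D) xi cbar V b theta Gam eta beta.
  move=> D; apply/eqP; rewrite -subr_eq0 key big1 ?mulr0 // => k _.
  by rewrite Hkey subrr ipc0.
have HS : S3 (fun k i l => eta k i l * b k i l * sqn (V k i l)) = beta * Etx.
  by rewrite Hbeta mulrAC mulVf ?mul1r // gt_eqF.
have Hbge : 0 <= beta.
  rewrite Hbeta; apply: mulr_ge0; first by rewrite invr_ge0 ltW.
  apply: sumr_ge0 => k _; apply: sumr_ge0 => l _; apply: sumr_ge0 => i hli.
  by apply: mulr_ge0; [apply: mulr_ge0; [exact: Heta | exact: ltW (Hb _ _ _ hli)] | exact: sqn_ge0].
have Htr : beta * (trPPH P - Etx) = 0.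
  have H0 := HkeyP P.
  have E : lagr hch alpha Etx xith (P + P) xi cbar V b theta Gam eta beta
         - lagr hch alpha Etx xith (P - P) xi cbar V b theta Gam eta beta
         = 4 * (beta * trPPH P - S3 (fun k i l => eta k i l * b k i l * sqn (V k i l))).
    rewrite lagr_diff.
    have -> : trPPH (P + P) = 4 * trPPH P.
      rewrite !trPPH_E mulr_sumr; apply: eq_bigr => m _; rewrite mulr_sumr.
      by apply: eq_bigr => k _; rewrite mxE sqn2.
    have -> : trPPH (P - P) = 0.
      rewrite subrr trPPH_E big1 // => m _; rewrite big1 // => k _.
      by rewrite mxE /sqn /= expr0n /= addr0.
    have -> : S3 (fun k i l => eta k i l * b k i l *
         (mse hch alpha (P + P) (V k i l) k i l - mse hch alpha (P - P) (V k i l) k i l))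
       = -4 * S3 (fun k i l => eta k i l * b k i l * sqn (V k i l)).
      rewrite -S3Z /S3; apply: eq_bigr => k _; apply: eq_bigr => l _; apply: eq_bigr => i hli.
      rewrite mse_diff cip_self (ReV (HTT P k i l) (HV k i l hli)).
      have -> : \sum_(t < K | t != k) cip (hp hch P k i t) (hp hch P k i t) = \sum_(t < K | t != k) sqn (hp hch P k i t) by apply: eq_bigr => t _; rewrite cip_self.
      rewrite /Defs.TT /Defs.rr -mulr_suml; ring.
    ring.
  have E4 : 4 * (beta * (trPPH P - Etx)) = 0.
    by rewrite mulrBr -HS -E H0 subrr.
  by move/eqP: E4; rewrite mulf_eq0 pnatr_eq0 /= => /eqP.
split.
  move=> k i l hli; apply: ws_dir.
    move=> d.
    apply: (quad_ext (g := fun t => lagr hch alpha Etx xith P xi cbar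
        (fun k' i' l' => V k' i' l' + Complex t 0 * Wd k i l d k' i' l') b theta Gam eta beta)).
      by move=> t; rewrite updV_line.
    apply: quad_lagr; first exact: quad_cst.
    by move=> k' i' l'; apply: quad_mse_V.
  move=> d; apply/eqP; rewrite -subr_eq0 lagr_diff subrr mulr0 add0r.
  rewrite /S3 big1 // => k' _; rewrite big1 // => l' _; rewrite big1 // => i' hi'.
  rewrite /updV; case: ifP => [/and3P [/eqP -> /eqP -> /eqP ->] | _]; last by rewrite subrr mulr0.
  by rewrite (mse_sym _ (HTT P k i l) (HV k i l hli)) subrr mulr0.
split.
  move=> m k; apply: ws_dir.
    move=> d.
    apply: (quad_ext (g := fun t => lagr hch alpha Etx xith (P + Complex t 0 *: Dm m k d)
        xi cbar V b theta Gam eta beta)).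
      by move=> t; rewrite updM_line Dm_scale.
    apply: quad_lagr; first exact: quad_trPPH.
    by move=> k' i' l'; apply: quad_mse_P.
  by move=> d; rewrite updM_line updM_lineB; apply: HkeyP.
split; last by split.
have [Hb0 | Hbn0] := eqVneq beta 0; last first.
  by move/eqP: Htr; rewrite mulf_eq0 (negbTE Hbn0) /= subr_eq0 => /eqP ->.
have HS0 : S3 (fun k i l => eta k i l * b k i l * sqn (V k i l)) = 0 by rewrite HS Hb0 mul0r.
have Hz := S3_zero HS0.
have Hz' : forall (k : 'I_K) (i l : 'I_L), (l <= i)%N -> eta k i l * b k i l * sqn (V k i l) = 0.
  apply: Hz => k i l hli.
  by apply: mulr_ge0; [apply: mulr_ge0; [exact: Heta | exact: ltW (Hb _ _ _ hli)] | exact: sqn_ge0].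
have Hcol : forall k, col k P = 0.
  move=> k.
  have [Hu Hc] : Amat hch alpha V b eta beta k \in unitmx /\
     col k P = invmx (Amat hch alpha V b eta beta k) *m rhsv hch alpha V b eta k := HP k.
  rewrite Hc.
  have -> : rhsv hch alpha V b eta k = 0.
    rewrite /rhsv big1 // => l _; rewrite big1 // => i hli.
    have := Hz' k i l hli.
    move/eqP; rewrite mulf_eq0 mulf_eq0 => /orP [/orP [/eqP -> | /eqP hb0] | /eqP hs].
    - by rewrite !mul0r scale0r.
    - by move: (Hb k i l hli); rewrite hb0 ltxx.
    - by rewrite (sqn_eq0 hs) conjc0 mulr0 scale0r.
  by rewrite mulmx0.
rewrite trPPH_E big1 ?ltW // => m _; rewrite big1 // => k _.
have := congr1 (fun X : 'cV[R[i]]_M => X m 0) (Hcol k); rewrite !mxE => ->.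
by rewrite /sqn /= expr0n /= addr0.
Qed.
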